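(* Let $G=(V,E)$ be a finite, simple, undirected, unweighted graph, let $h$ be a positive integer, let $v\in V$, let $u\in N_v^h(G)$ and put $s=dis_G(u,v)$. Then for every $w\in N_v^{h-s}(G)$, $$dis_{G(V\setminus\{v\})}(u,w)\le h \iff dis_{G(N_v^h(G))}(u,w)\le h .$$ Consequently, with $F_u=\{w\in N_v^{h-s}(G): dis_{G(V\setminus\{v\})}(u,w)>h\}$, one has $F_u=\{w\in N_v^{h-s}(G): dis_{G(N_v^h(G))}(u,w)>h\}$ and $$d_u^h\big(G(V\setminus\{v\})\big)=d_u^h(G)-1-\big|\{w\in N_v^{h-s}(G): dis_{G(N_v^h(G))}(u,w)>h\}\big|.$$
   Context: For a graph $H$ and vertices $x,y$ of $H$, $dis_H(x,y)$ denotes the shortest-path distance between $x$ and $y$ in $H$ (equal to $+\infty$ if no path exists). For a nonnegative integer $t$, the $t$-hop neighborhood of a vertex $x$ in $H=(V_H,E_H)$ is $N_x^t(H)=\{y\in V_H : y\neq x,\ dis_H(x,y)\le t\}$, and the $t$-hop degree is $d_x^t(H)=|N_x^t(H)|$. For $S\subseteq V$, $G(S)$ denotes the subgraph of $G$ induced by $S$. *)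

(* Defs.v *)
(* A finite simple undirected graph is a symmetric,
   irreflexive relation e on a finType T (vertex set V = [set: T]).
   Induced subgraphs G(S) are described by the vertex set S : {set T}. *)
From mathcomp Require Import all_boot all_order all_algebra.
Set Implicit Arguments. Unset Strict Implicit. Unset Printing Implicit Defensive.

Section Graph.
Variables (T : finType) (e : rel T).

(* dis_{G(S)}(x,y) <= k : there is a walk x = x_0, x_1, ..., x_j = y in G
   with j <= k, all of whose vertices lie in S. *)
Definition dis_le (S : {set T}) (x y : T) (k : nat) : bool :=
  [exists j : 'I_k.+1, [exists p : j.-tuple T,
     [&& x \in S, all (fun z => z \in S) p, path e x p & last x p == y]]].

Definition dis_eq (S : {set T}) (x y : T) (s : nat) : bool :=
  dis_le S x y s && [forall k : 'I_s, ~~ dis_le S x y k].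

Definition nbhd (S : {set T}) (x : T) (t : nat) : {set T} :=
  [set y in S | (y != x) && dis_le S x y t].

Definition hdeg (S : {set T}) (x : T) (t : nat) : nat := #|nbhd S x t|.
End Graph.

(* Main.v *)
Require Import Defs.
From mathcomp Require Import all_boot all_order all_algebra.
From mathcomp Require Import zify.
Set Implicit Arguments. Unset Strict Implicit. Unset Printing Implicit Defensive.

Section H.
Variables (T : finType) (e : rel T).
Hypothesis e_sym : symmetric e.

Lemma dis_leP (S : {set T}) x y k :
  reflect (exists p : seq T, [/\ size p <= k, x \in S, all (fun z => z \in S) p,
            path e x p & last x p = y]) (dis_le e S x y k).
Proof.
apply: (iffP existsP).
  move=> [j /existsP [p /and4P [xS pS pp /eqP lp]]].
  by exists (val p); rewrite size_tuple -ltnS ltn_ord.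
move=> [p [sz xS pS pp lp]].
have Hj : size p < k.+1 by [].
exists (Ordinal Hj); apply/existsP; exists (in_tuple p).
by rewrite /= xS pS pp lp eqxx.
Qed.

Lemma dis_le_mono (S S' : {set T}) x y k k' : S \subset S' -> k <= k' ->
  dis_le e S x y k -> dis_le e S' x y k'.
Proof.
move=> sS kk /dis_leP [p [sz xS pS pp lp]]; apply/dis_leP; exists p; split => //.
- exact: leq_trans kk.
- exact: (subsetP sS).
- by apply/allP => z zp; apply: (subsetP sS); exact: (allP pS).
Qed.

Lemma dis_le_refl (S : {set T}) x k : x \in S -> dis_le e S x x k.
Proof. by move=> xS; apply/dis_leP; exists [::]. Qed.

Lemma dis_le_cat (S : {set T}) x y z a b :
  dis_le e S x y a -> dis_le e S y z b -> dis_le e S x z (a + b).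
Proof.
move=> /dis_leP [p [sz xS pS pp lp]] /dis_leP [q [sz' yS qS qp lq]].
apply/dis_leP; exists (p ++ q); split => //.
- by rewrite size_cat leq_add.
- by rewrite all_cat pS.
- by rewrite cat_path pp lp.
- by rewrite last_cat lp.
Qed.

Lemma dis_le_sym (S : {set T}) x y k : dis_le e S x y k -> dis_le e S y x k.
Proof.
move=> /dis_leP [p [sz xS pS pp lp]]; apply/dis_leP.
case/lastP: p sz pS pp lp => [|q z] sz pS pp lp.
  by exists [::]; rewrite -lp.
rewrite last_rcons in lp; subst z.
rewrite size_rcons in sz; rewrite all_rcons in pS; case/andP: pS => zS qS.
exists (rev (x :: q)); rewrite size_rev /=.
split => //.
- by rewrite all_rev /= xS qS.
- have := rev_path e x (rcons q y); rewrite belast_rcons last_rcons => ->.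
  by rewrite (eq_path (e' := e)) // => a b; rewrite /= e_sym.
- by rewrite rev_cons last_rcons.
Qed.

Lemma dis_le_split (S : {set T}) x y k z p : size p <= k -> x \in S -> all (fun z => z \in S) p ->
  path e x p -> last x p = y -> z \in x :: p ->
  exists i j, [/\ i + j <= k, dis_le e S x z i & dis_le e S z y j].
Proof.
move=> sz xS pS pp lp zp; case/splitPl: zp sz pS pp lp => p1 p2 l1.
rewrite size_cat all_cat cat_path last_cat l1.
move=> sz /andP [p1S p2S] /andP [pp1 pp2] lp.
exists (size p1), (size p2); split => //.
  by apply/dis_leP; exists p1.
apply/dis_leP; exists p2; split => //.
rewrite -l1; have := mem_last x p1; rewrite inE => /orP [/eqP -> //|].
exact: (allP p1S).
Qed.
End H.

Theorem mainTheorem4 (T : finType) (e : rel T)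
    (e_sym : symmetric e) (e_irr : irreflexive e)
    (h : nat) (h_pos : 0 < h) (v u : T) (s : nat)
    (hu : u \in nbhd e [set: T] v h)
    (hs : dis_eq e [set: T] u v s) :
  (forall w, w \in nbhd e [set: T] v (h - s) ->
     (dis_le e ([set: T] :\ v) u w h <-> dis_le e (nbhd e [set: T] v h) u w h))
  /\ [set w in nbhd e [set: T] v (h - s) | ~~ dis_le e ([set: T] :\ v) u w h]
     = [set w in nbhd e [set: T] v (h - s) | ~~ dis_le e (nbhd e [set: T] v h) u w h]
  /\ ((hdeg e ([set: T] :\ v) u h)%:Z
      = (hdeg e [set: T] u h)%:Z - 1
        - (#|[set w in nbhd e [set: T] v (h - s)
               | ~~ dis_le e (nbhd e [set: T] v h) u w h]|)%:Z)%R.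
Proof.
have hu' := hu; rewrite /nbhd !inE /= in hu'; case/andP: hu' => unv hvu.
case/andP: hs => hs1 /forallP hs2.
have smin : forall i, dis_le e [set: T] u v i -> s <= i.
  move=> i Hi; rewrite leqNgt; apply/negP => lt; have := hs2 (Ordinal lt).
  by rewrite Hi.
have sh : s <= h by apply: smin; exact: dis_le_sym.
have uV : u \in [set: T] :\ v by rewrite !inE unv.
have P1 : forall w, w \in nbhd e [set: T] v (h - s) ->
     (dis_le e ([set: T] :\ v) u w h <-> dis_le e (nbhd e [set: T] v h) u w h).
  move=> w hw; have hw' := hw; rewrite /nbhd !inE /= in hw'.
  case/andP: hw' => wnv hvw.
  split.
    move=> /dis_leP [p [sz uS pS pp lp]]; apply/dis_leP; exists p; split => //.
    apply/allP => z zp; have zS : z \in [set: T] :\ v by exact: (allP pS).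
    have zu : z \in u :: p by rewrite inE zp orbT.
    have [i [j [ij Hi Hj]]] := dis_le_split sz uS pS pp lp zu.
    rewrite /nbhd !inE /=; rewrite !inE andbT in zS; rewrite zS /=.
    case: (leqP i (h - s)) => hi.
      have := dis_le_cat (dis_le_sym e_sym hs1) (dis_le_mono (subsetT _) (leqnn _) Hi).
      by apply: dis_le_mono (subxx _) _; clear -ij hi sh; lia.
    have := dis_le_cat hvw (dis_le_sym e_sym (dis_le_mono (subsetT _) (leqnn _) Hj)).
    by apply: dis_le_mono (subxx _) _; clear -ij hi sh; lia.
  apply: dis_le_mono (leqnn _).
  by apply/subsetP => z; rewrite /nbhd !inE /= => /andP [-> _].
have P2 : [set w in nbhd e [set: T] v (h - s) | ~~ dis_le e ([set: T] :\ v) u w h]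
     = [set w in nbhd e [set: T] v (h - s) | ~~ dis_le e (nbhd e [set: T] v h) u w h].
  apply/setP => w; rewrite !inE; case hw0: ((w != v) && dis_le e [set: T] v w (h - s)) => //=.
  have hw : w \in nbhd e [set: T] v (h - s) by rewrite /nbhd !inE.
  by have := P1 w hw; case: (dis_le e ([set: T] :\ v) u w h);
     case: (dis_le e (nbhd e [set: T] v h) u w h) => // [[H1 H2]];
     [have := H1 isT | have := H2 isT].
split => //; split => //.
rewrite -P2.
set A := nbhd e ([set: T] :\ v) u h.
set F := [set w in nbhd e [set: T] v (h - s) | ~~ dis_le e ([set: T] :\ v) u w h].
set N := nbhd e [set: T] u h.
have vN : v \in N.
  rewrite /N /nbhd !inE /= eq_sym unv /=.
  exact: dis_le_mono (subxx _) sh hs1.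
have AF : A :&: F = set0.
  apply/setP => y; rewrite /A /F /nbhd !inE.
  by case: (dis_le e ([set: T] :\ v) u y h); rewrite ?andbF ?andbT ?andFb.
have NAF : N :\ v = A :|: F.
  apply/setP => y; rewrite /A /F /N /nbhd !inE /=.
  case Db: (dis_le e ([set: T] :\ v) u y h); rewrite ?andbT ?andbF ?orbF ?orbT /=.
    by rewrite (dis_le_mono (subsetT _) (leqnn _) Db) !andbT andbC.
  apply/idP/idP.
    case/andP => ynv /andP [ynu /dis_leP [p [sz uS pS pp lp]]].
    rewrite ynv /=.
    have vp : v \in u :: p.
      apply/negPn/negP => vnp; move/negbT/negP: Db; apply.
      apply/dis_leP; exists p; split => //.
      apply/allP => z zp; rewrite !inE andbT; apply/negP => /eqP zv.
      by rewrite inE -zv zp orbT in vnp.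
    have [i [j [ij Hi Hj]]] := dis_le_split sz uS pS pp lp vp.
    have := smin _ Hi => si.
    by apply: (dis_le_mono (subxx _) _ Hj); clear -ij si sh; lia.
  case/andP => ynv Hvy; rewrite ynv /=; apply/andP; split.
    apply/negP => /eqP yu; move/negbT/negP: Db; apply; rewrite yu.
    exact: dis_le_refl.
  have := dis_le_cat hs1 Hvy; apply: dis_le_mono (subxx _) _; clear -sh; lia.
have cN : #|N| = 1 + #|A| + #|F|.
  by rewrite (cardsD1 v N) vN NAF cardsU AF cards0 subn0 addnA.
rewrite /hdeg -/A -/N cN.
clear.
rewrite -!addnA PoszD.
by rewrite [(1%:Z + _)%R]GRing.addrC GRing.addrK PoszD GRing.addrK.
Qed.
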